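(* Let $(\theta_t)_{t\in\mathbb R}$ be a smooth green path and $t_0<t_1$. If $X_0\in\mathcal W(\theta_{t_0})$ and $X_1\in\mathcal W(\theta_{t_1})$, then every strict morphism $X_0\to X_1$ is zero. Moreover, for each $t$, every strict morphism between two non-isomorphic objects of $\mathcal W_0(\theta_t)$ is zero.
   Context: Let $\Lambda$ be a finite dimensional algebra over a field with $n$ isoclasses of simple modules, and $\mathrm{mod}\text-\Lambda$ the category of finitely generated right $\Lambda$-modules. Fix a torsion class $\mathcal G\subseteq\mathrm{mod}\text-\Lambda$ (closed under isomorphisms, extensions and quotients). For $B\in\mathcal G$, a subobject of $B$ is a submodule in $\mathcal G$; a subobject $A\subseteq B$ is strict if $A\cap B'\in\mathcal G$ for every subobject $B'$ of $B$; a strict quotient of $B$ is $B/A$ with $A$ a strict subobject. A strict morphism is a homomorphism $f:A\to B$ with $A,B\in\mathcal G$ such that $\ker f\in\mathcal G$ is a strict subobject of $A$ and $\operatorname{im} f$ is a strict subobject of $B$. Let $V_\Lambda=\mathrm{Hom}_{\mathbb Z}(K_0\Lambda,\mathbb R)\cong\mathbb R^n$; $\theta(M)$ denotes $\theta$ applied to the dimension vector of $M$. For $M\in\mathcal G$, $D_{\mathcal G}(M)$ is the set of $\theta$ with $\theta(M)=0$ and $\theta(M')\le0$ for every strict subobject $M'$ of $M$. $\mathcal W(\theta)$ is the class of $X\in\mathcal G$ with $\theta\in D_{\mathcal G}(X)$, and $\mathcal W_0(\theta)$ is the class of nonzero $X\in\mathcal W(\theta)$ such that no nonzero proper strict subobject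 of $X$ lies in $\mathcal W(\theta)$. A smooth green path is a smooth map $t\mapsto\theta_t$, $\mathbb R\to V_\Lambda$, such that: (1) whenever $\theta_{t_0}\in D_{\mathcal G}(M)$ for some nonzero $M\in\mathcal G$, $\frac{d}{dt}\theta_t(M)|_{t=t_0}>0$; (2) there is $T$ such that $\theta_t(M)>0$ for all $t>T$ and all nonzero $M\in\mathcal G$; (3) there is $T'$ such that $\theta_t(M)<0$ for all $t<T'$ and all nonzero $M\in\mathcal G$. *)

(* Defs.v *)
From HB Require Import structures.
From mathcomp Require Import all_boot all_order all_algebra all_field.
From mathcomp Require Import all_classical all_reals all_analysis.
Set Implicit Arguments. Unset Strict Implicit. Unset Printing Implicit Defensive.
Import Order.TTheory GRing.Theory Num.Theory.
Local Open Scope ring_scope.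

Section Reps.
Variables (K : fieldType) (A : falgType K).

(* Raw data of a finite dimensional right A-module: a K-space K^d (row
   vectors) with a right action  v . a = v *m ract a. *)
Record rep := Rep { rdim : nat; ract : A -> 'M[K]_rdim }.

Definition is_rep (M : rep) : Prop :=
  [/\ forall (k : K) (a b : A), ract M (k *: a + b) = k *: ract M a + ract M b,
      ract M 1 = 1%:M &
      forall a b : A, ract M (a * b) = ract M a *m ract M b].

Definition is_hom (M N : rep) (f : 'M[K]_(rdim M, rdim N)) : Prop :=
  forall a : A, ract M a *m f = f *m ract N a.

Definition stable (M : rep) r (U : 'M[K]_(r, rdim M)) : Prop :=
  forall a : A, (U *m ract M a <= U)%MS.

Definition subrep (M : rep) r (U : 'M[K]_(r, rdim M)) : rep :=
  @Rep (\rank U) (fun a => row_base U *m ract M a *m pinvmx (row_base U)).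

Definition ses (L M N : rep) (f : 'M[K]_(rdim L, rdim M))
  (g : 'M[K]_(rdim M, rdim N)) : Prop :=
  [/\ is_rep L, is_rep M, is_rep N, is_hom f & is_hom g] /\
  [/\ row_free f, row_full g & (f == kermx g)%MS].

Definition rep_iso (M N : rep) : Prop :=
  exists (f : 'M[K]_(rdim M, rdim N)) (g : 'M[K]_(rdim N, rdim M)),
    [/\ is_hom f, is_hom g, f *m g = 1%:M & g *m f = 1%:M].

Definition torsion_class (G : rep -> Prop) : Prop :=
  [/\ (forall M N, is_rep M -> is_rep N -> rep_iso M N -> G M -> G N),
      (forall L M N f g, @ses L M N f g -> G L -> G N -> G M) &
      (forall M N (g : 'M[K]_(rdim M, rdim N)),
          is_rep M -> is_rep N -> is_hom g -> row_full g -> G M -> G N)].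

Variable G : rep -> Prop.

Definition subobj (B : rep) r (U : 'M[K]_(r, rdim B)) : Prop :=
  stable U /\ G (subrep U).

Definition strict_sub (B : rep) r (U : 'M[K]_(r, rdim B)) : Prop :=
  subobj U /\
  forall r' (U' : 'M[K]_(r', rdim B)), subobj U' -> G (subrep (U :&: U')%MS).

Definition strict_mor (X Y : rep) (f : 'M[K]_(rdim X, rdim Y)) : Prop :=
  [/\ is_hom f, G X, G Y, strict_sub (kermx f) & strict_sub f].

(* V_Lambda = Hom_Z(K_0 Lambda, R): functions on modules additive on
   short exact sequences (universal property of K_0). *)
Definition additive_fun (R : realType) (th : rep -> R) : Prop :=
  forall L M N f g, @ses L M N f g -> th M = th L + th N.

Definition D_G (R : realType) (th : rep -> R) (M : rep) : Prop :=
  th M = 0 /\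
  forall r (U : 'M[K]_(r, rdim M)), strict_sub U -> th (subrep U) <= 0.

Definition W (R : realType) (th : rep -> R) (X : rep) : Prop :=
  [/\ is_rep X, G X & D_G th X].

Definition W0 (R : realType) (th : rep -> R) (X : rep) : Prop :=
  [/\ W th X, (0 < rdim X)%N &
      forall r (U : 'M[K]_(r, rdim X)), strict_sub U ->
        (0 < \rank U < rdim X)%N -> ~ W th (subrep U)].

Definition smooth_fun (R : realType) (h : R -> R) : Prop :=
  forall (n : nat) (x : R), derivable (derive1n n h) x 1.

Definition green_path (R : realType) (theta : R -> rep -> R) : Prop :=
  [/\ forall t, additive_fun (theta t),
      forall M, is_rep M -> smooth_fun (fun t => theta t M),
      (forall t0 M, is_rep M -> G M -> (0 < rdim M)%N -> D_G (theta t0) M ->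
          0 < derive1 (fun t => theta t M) t0),
      (exists T, forall t M, T < t -> is_rep M -> G M -> (0 < rdim M)%N ->
          0 < theta t M) &
      (exists T', forall t M, t < T' -> is_rep M -> G M -> (0 < rdim M)%N ->
          theta t M < 0)].

End Reps.

(* Main.v *)
Require Import Defs.
From HB Require Import structures.
From mathcomp Require Import all_boot all_order all_algebra all_field.
From mathcomp Require Import all_classical all_reals all_analysis.
From mathcomp Require Import lra zify.
Import Order.TTheory GRing.Theory Num.Theory.

Module AnaM.
Set Implicit Arguments. Unset Strict Implicit. Unset Printing Implicit Defensive.
Import Order.TTheory GRing.Theory Num.Theory.
Import numFieldNormedType.Exports.
Local Open Scope ring_scope.
Local Open Scope classical_set_scope.

Section Ana.
Variable R : realType.

Lemma near_eps (x : R) (P : R -> Prop) : (\forall y \near x, P y) ->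
  exists e : R, 0 < e /\ forall y, `|x - y| < e -> P y.
Proof.
move=> /nbhs_ballP [e e0 H]; exists e; split => // y hy; exact: H.
Qed.

Lemma dnear_eps (P : R -> Prop) : (\forall y \near (0:R)^', P y) ->
  exists e : R, 0 < e /\ forall y, y != 0 -> `|y| < e -> P y.
Proof.
move=> H; have [e [e0 He]] := near_eps H; exists e; split => // y y0 ye.
by apply: He => //; rewrite sub0r normrN.
Qed.

Lemma deriv_pos (h : R -> R) x : derivable h x 1 -> 0 < h^`() x ->
  exists e : R, 0 < e /\ forall y, y != 0 -> `|y| < e -> 0 < y^-1 * (h (y + x) - h x).
Proof.
move=> d; rewrite derive1E => dp; apply: dnear_eps.
have Hn : \forall t \near (0:R)^', 0 < t^-1 *: ((h \o shift x) t%:A - h x).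
  exact: cvgr_gt d _ dp.
by apply: filterS Hn => y /=; rewrite [_%:A]mulr1.
Qed.

Lemma cont_pos (h : R -> R) x : {for x, continuous h} -> 0 < h x ->
  exists e : R, 0 < e /\ forall y, `|x - y| < e -> 0 < h y.
Proof. by move=> c hx; apply: near_eps; apply: cvgr_gt _ c 0 hx. Qed.

Lemma cont_neg (h : R -> R) x : {for x, continuous h} -> h x < 0 ->
  exists e : R, 0 < e /\ forall y, `|x - y| < e -> h y < 0.
Proof. by move=> c hx; apply: near_eps; apply: cvgr_lt _ c 0 hx. Qed.

Lemma small (e c : R) : 0 < e -> 0 < c -> exists y, 0 < y /\ y < e /\ y < c.
Proof.
move=> e0 c0; case: (lerP e c) => h.
  by exists (e / 2); lra.
by exists (c / 2); lra.
Qed.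

Lemma RA (h : R -> R) (a b : R) :
  (forall x, derivable h x 1) -> a < b -> 0 <= h a -> h b <= 0 ->
  (h b = 0 -> 0 < h^`() b) ->
  exists t, [/\ a <= t, t < b, h t = 0 & ~ (0 < h^`() t)].
Proof.
move=> hd ab ha hb hb0.
have hc : forall x, {for x, continuous h}.
  by move=> x; apply: differentiable_continuous; apply/derivable1_diffP.
apply: contrapT => Hn.
have H : forall t, a <= t -> t < b -> h t = 0 -> 0 < h^`() t.
  move=> t ta0 tb ht; apply: contrapT => nd; apply: Hn; by exists t.
have [b' [ab' b'b hb']] : exists b', [/\ a < b', b' <= b & h b' < 0].
  case: (ltrP (h b) 0) => hb1; first by exists b; split => //.
  have hbz : h b = 0 by apply/eqP; rewrite eq_le hb hb1.
  have [e [e0 He]] := deriv_pos (hd b) (hb0 hbz).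
  have [y [y0 [ye yc]]] := small e0 (ltac:(by rewrite subr_gt0) : 0 < b - a).
  have := He (- y); rewrite oppr_eq0 normrN gtr0_norm // => /(_ (lt0r_neq0 y0) ye).
  rewrite hbz subr0 => hp; exists (- y + b); split; [lra| lra|].
  move: hp; rewrite invrN mulNr oppr_gt0 pmulr_rlt0 ?invr_gt0 //.
set S := [set t | a <= t <= b' /\ 0 <= h t].
have Sa : S a by rewrite /S /= lexx ltW.
have S0 : S !=set0 by exists a.
have Sub : ubound S b' by move=> t [/andP [_ ?] _].
have hS : has_sup S by split => //; exists b'.
set t := sup S.
have ta : a <= t by apply: sup_upper_bound.
have tb : t <= b' by apply: ge_sup.
have ht0 : 0 <= h t.
  rewrite leNgt; apply/negP => hn.
  have [d [d0 Hd]] := cont_neg (hc t) hn.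
  have [e Se te] := sup_adherent d0 hS.
  have et : e <= t by apply: sup_upper_bound.
  case: Se => _ he; have := Hd e; rewrite ger0_norm; last by rewrite subr_ge0.
  move=> H1; suff: h e < 0 by lra.
  by apply: H1; move: te; rewrite -/t; lra.
have tb' : t < b'.
  rewrite lt_neqAle tb andbT; apply/negP => /eqP E; move: ht0; rewrite E; lra.
have ht : h t = 0.
  apply/eqP; rewrite eq_le ht0 andbT leNgt; apply/negP => hp.
  have [d [d0 Hd]] := cont_pos (hc t) hp.
  have [y [y0 [yd yc]]] := small d0 (ltac:(by rewrite subr_gt0) : 0 < b' - t).
  have : S (t + y).
    split; first by apply/andP; split; lra.
    apply: ltW; apply: Hd; rewrite opprD addrA subrr sub0r normrN gtr0_norm //.
  move/(sup_upper_bound hS); rewrite -/t; lra.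
have dp := H t ta (lt_le_trans tb' b'b) ht.
have [e [e0 He]] := deriv_pos (hd t) dp.
have [y [y0 [ye yc]]] := small e0 (ltac:(by rewrite subr_gt0) : 0 < b' - t).
have := He y (lt0r_neq0 y0); rewrite gtr0_norm // => /(_ ye).
rewrite ht subr0 pmulr_rgt0 ?invr_gt0 // => hy.
have : S (y + t) by split; [apply/andP; split; lra | exact: ltW].
move/(sup_upper_bound hS); rewrite -/t; lra.
Qed.

End Ana.

End AnaM.

Module AlgM.
Set Implicit Arguments. Unset Strict Implicit. Unset Printing Implicit Defensive.
Import Order.TTheory GRing.Theory Num.Theory.
Local Open Scope ring_scope.

Section Alg.
Variables (K : fieldType) (A : falgType K).
Implicit Types (M N P Q : rep A).

Lemma mx0col M m (h : rdim M = 0%N) (B : 'M[K]_(m, rdim M)) : B = 0.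
Proof. by apply/eqP; rewrite -mxrank_eq0 -leqn0; by rewrite (leq_trans (rank_leq_col B)) ?h. Qed.

Lemma mx0row M m (h : rdim M = 0%N) (B : 'M[K]_(rdim M, m)) : B = 0.
Proof. by apply/eqP; rewrite -mxrank_eq0 -leqn0; by rewrite (leq_trans (rank_leq_row B)) ?h. Qed.

Definition Z0 : rep A := @Rep K A 0 (fun _ => 0).

Lemma is_rep_Z0 : is_rep Z0.
Proof.
have h : rdim Z0 = 0%N by [].
split => *; by rewrite [LHS](mx0col h) [RHS](mx0col h).
Qed.

Lemma theta0 (R : realType) (th : rep A -> R) M :
  additive_fun th -> is_rep M -> rdim M = 0%N -> th M = 0.
Proof.
move=> Hth HM h.
have : th M = th M + th M.
  apply: (Hth M M M 0 0); split; first by split => // a; rewrite mul0mx mulmx0.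
  split; rewrite /row_free /row_full ?mxrank0 ?h //.
  apply/andP; split; first exact: sub0mx.
  by rewrite submx0 -mxrank_eq0 -leqn0 (leq_trans (rank_leq_col _)) ?h.
lra.
Qed.

Lemma iso_theta (R : realType) (th : rep A -> R) P Q :
  additive_fun th -> is_rep P -> is_rep Q -> rep_iso P Q -> th P = th Q.
Proof.
move=> Hth HP HQ [g [h [Hg Hh Egh Ehg]]].
have rg : \rank g = rdim P.
  apply/eqP; rewrite eqn_leq rank_leq_row /=.
  by rewrite -{1}(mxrank1 K (rdim P)) -Egh mxrankM_maxl.
have rgQ : \rank g = rdim Q.
  apply/eqP; rewrite eqn_leq rank_leq_col /=.
  by rewrite -{1}(mxrank1 K (rdim Q)) -Ehg mxrankM_maxr.
have := Hth Z0 P Q 0 g; rewrite (theta0 Hth is_rep_Z0) // add0r; apply.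
split; first split => //; first exact: is_rep_Z0.
  by move=> a; rewrite mulmx0 mul0mx.
split; rewrite /row_free /row_full ?mxrank0 ?rgQ //.
apply/andP; split; first exact: sub0mx.
have kg0 : kermx g = 0 by apply/eqP; rewrite -mxrank_eq0 mxrank_ker rg subnn.
by rewrite kg0 sub0mx.
Qed.

Lemma iso_sym P Q : rep_iso P Q -> rep_iso Q P.
Proof. by move=> [f [g [? ? ? ?]]]; exists g, f. Qed.

Lemma mulmx_aux m n (B : 'M[K]_(m, n)) (Ra Rb : 'M[K]_n) (p : 'M[K]_(n, m)) :
  B *m Ra *m p *m B = B *m Ra ->
  B *m (Ra *m Rb) *m p = B *m Ra *m p *m (B *m Rb *m p).
Proof. by move=> E; rewrite !mulmxA E. Qed.

Lemma emb_alg p n k (E : 'M[K]_(p,n)) (B : 'M[K]_(k,n)) (pU : 'M[K]_(n,k))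
  (pE : 'M[K]_(n,p)) (RP : A -> 'M[K]_p) (RM : A -> 'M[K]_n) :
 E *m pU *m B = E -> B *m pE *m E = B -> E *m pE = 1%:M -> B *m pU = 1%:M ->
 (forall a, RP a *m E = E *m RM a) ->
 (forall a, B *m RM a *m pU *m B = B *m RM a) ->
 (forall a, B *m RM a *m pE *m E = B *m RM a) -> row_free E ->
 [/\ forall a, RP a *m (E *m pU) = (E *m pU) *m (B *m RM a *m pU),
     forall a, (B *m RM a *m pU) *m (B *m pE) = (B *m pE) *m RP a,
     (E *m pU) *m (B *m pE) = 1%:M & (B *m pE) *m (E *m pU) = 1%:M].
Proof.
move=> E1 E2 E3 E4 HE E5 E6 HEf; split.
- by move=> a; rewrite mulmxA HE !mulmxA E1.
- move=> a; rewrite !mulmxA E5; apply: (row_free_inj HEf).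
  by rewrite E6 -!mulmxA HE !mulmxA E2.
- by rewrite mulmxA E1 E3.
- by rewrite mulmxA E2 E4.
Qed.

Notation sub2 U V := (@subrep _ _ (subrep U) _ V).
Section Sub.
Variables (M : rep A) (r : nat) (U : 'M[K]_(r, rdim M)).
Hypothesis (HM : is_rep M) (HU : stable U).

Lemma rbS a : (row_base U *m ract M a <= row_base U)%MS.
Proof. by rewrite (eqmxMr _ (eq_row_base U)) (eq_row_base U) HU. Qed.

Lemma rbK : row_base U *m pinvmx (row_base U) = 1%:M.
Proof. exact: mulmxVp (row_base_free U). Qed.

Lemma is_rep_sub : is_rep (subrep U).
Proof.
case: HM => Hl H1 Hm; split => /=.
- move=> k a b; rewrite Hl mulmxDr mulmxDl; congr (_ + _).
  by rewrite -scalemxAr -scalemxAl.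
- have -> : ract M 1 = 1%:M by exact: H1.
  by rewrite mulmx1 rbK.
- move=> a b; rewrite Hm; apply: mulmx_aux; exact: mulmxKpV (rbS a).
Qed.

Lemma hom_rb : @is_hom K A (subrep U) M (row_base U).
Proof. by move=> a /=; rewrite mulmxKpV // rbS. Qed.

Lemma is_hom_comp P Q N (f : 'M[K]_(rdim P, rdim Q)) (g : 'M[K]_(rdim Q, rdim N)) :
  is_hom f -> is_hom g -> is_hom (f *m g).
Proof. by move=> Hf Hg a; rewrite mulmxA Hf -mulmxA Hg mulmxA. Qed.

Lemma emb_iso P (E : 'M[K]_(rdim P, rdim M)) :
  row_free E -> is_hom E -> (E == U)%MS -> rep_iso P (subrep U).
Proof.
move=> HEf HE /eqmxP EU.
have EsU : (E <= row_base U)%MS by rewrite (eq_row_base U) -EU.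
have UsE : (row_base U <= E)%MS by rewrite (eq_row_base U) -EU.
have [h1 h2 h3 h4] := emb_alg (mulmxKpV EsU) (mulmxKpV UsE)
  (mulmxVp HEf) rbK HE (fun a => mulmxKpV (rbS a))
  (fun a => mulmxKpV (submx_trans (rbS a) UsE)) HEf.
exists (E *m pinvmx (row_base U)), (row_base U *m pinvmx E); split; [exact: h1|exact: h2|exact: h3|exact: h4].
Qed.

Lemma full_iso : \rank U = rdim M -> rep_iso M (subrep U).
Proof.
move=> hr; apply: (@emb_iso M 1%:M).
- by rewrite /row_free mxrank1.
- by move=> a; rewrite mulmx1 mul1mx.
- by rewrite submx1 andbT sub1mx; apply/eqP.
Qed.

Lemma stable_nest s (V : 'M[K]_(s, \rank U)) :
  @stable K A (subrep U) s V -> stable (V *m row_base U).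
Proof.
move=> HV a; have E := mulmxKpV (rbS a).
have -> : V *m row_base U *m ract M a =
  V *m (row_base U *m ract M a *m pinvmx (row_base U)) *m row_base U.
  by rewrite -[RHS]mulmxA E [RHS]mulmxA.
by apply: submxMr; apply: HV.
Qed.

End Sub.

Lemma nest_iso M r (U : 'M[K]_(r, rdim M)) s (V : 'M[K]_(s, \rank U))
   q (Vm : 'M[K]_(q, rdim M)) :
  is_rep M -> stable U -> @stable K A (subrep U) s V -> stable Vm ->
  (Vm == V *m row_base U)%MS -> rep_iso (sub2 U V) (subrep Vm).
Proof.
move=> HM HU HV HVm /eqmxP EV.
apply: (@emb_iso M q Vm HVm (sub2 U V) (row_base V *m row_base U)).
- by rewrite /row_free mxrankMfree ?row_base_free //; exact: row_base_free.
- by apply: (@is_hom_comp (sub2 U V) (subrep U) M); apply: hom_rb.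
- by apply/eqmxP; apply: eqmx_trans (eqmxMr _ (eq_row_base V)) (eqmx_sym EV).
Qed.

Lemma hom_aux m n k (Rx : 'M[K]_m) (f : 'M[K]_(m,n)) (Ry : 'M[K]_n)
  (p : 'M[K]_(n,k)) (B : 'M[K]_(k,n)) :
  Rx *m f = f *m Ry -> f *m p *m B = f -> Rx *m (f *m p) = f *m p *m (B *m Ry *m p).
Proof. by move=> H E; rewrite mulmxA H !mulmxA E. Qed.

Lemma ker_aux m n k l (Bk : 'M[K]_(l, m)) (f : 'M[K]_(m,n))
  (p : 'M[K]_(n,k)) (B : 'M[K]_(k,n)) :
  f *m p *m B = f -> Bk *m (f *m p) = 0 -> Bk *m f = 0.
Proof. by move=> E H; rewrite -E !mulmxA -(mulmxA Bk) H mul0mx. Qed.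

Lemma mul_aux m n k (R : 'M[K]_n) (C : 'M[K]_(m, n)) (p : 'M[K]_(n,k)) (B : 'M[K]_(k,n)) :
  C *m p *m B = C -> C *m p *m (B *m R *m p) = C *m R *m p.
Proof. by move=> E; rewrite !mulmxA E. Qed.

Section KerIm.
Variables (X Y : rep A) (f : 'M[K]_(rdim X, rdim Y)).
Hypotheses (HX : is_rep X) (HY : is_rep Y) (Hf : is_hom f).

Lemma stable_ker : stable (kermx f).
Proof. by move=> a; rewrite sub_kermx -mulmxA Hf mulmxA mulmx_ker mul0mx. Qed.

Lemma stable_im : @stable K A Y _ f.
Proof. by move=> a; rewrite -Hf submxMl. Qed.

Lemma kerim_theta (R : realType) (th : rep A -> R) :
  additive_fun th -> th X = th (subrep (kermx f)) + th (subrep f).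
Proof.
move=> Hth.
have fsb : (f <= row_base f)%MS by rewrite (eq_row_base f).
move: (mulmxKpV fsb); set pf := pinvmx (row_base f) => E1.
apply: (Hth (subrep (kermx f)) X (subrep f) (row_base (kermx f)) (f *m pf)).
split; split.
- exact: is_rep_sub HX stable_ker.
- exact: HX.
- exact: is_rep_sub HY stable_im.
- exact: hom_rb stable_ker.
- move=> a /=.
  exact: hom_aux (Hf a) E1.
- exact: row_base_free.
- rewrite /row_full /=; apply/eqP/eqP; rewrite eqn_leq rank_leq_col /=.
  by rewrite -{1}E1 mxrankM_maxl.
- have EK : (kermx f == kermx (f *m pf))%MS.
    apply/andP; split; rewrite sub_kermx.
      by rewrite mulmxA mulmx_ker mul0mx.
    by apply/eqP; apply: (ker_aux E1); rewrite mulmx_ker.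
  by apply/eqmxP; apply: eqmx_trans (eq_row_base _) _; apply/eqmxP.
Qed.
End KerIm.

Section Strict.
Variable G : rep A -> Prop.
Hypothesis tcG : torsion_class G.

Lemma G_iso P Q : is_rep P -> is_rep Q -> rep_iso P Q -> G P -> G Q.
Proof. by case: tcG => H _ _; apply: H. Qed.

Lemma stable_cap M r s (U : 'M[K]_(r, rdim M)) (V : 'M[K]_(s, rdim M)) :
  stable U -> stable V -> stable (U :&: V)%MS.
Proof.
move=> HU HV a; rewrite sub_capmx; apply/andP; split.
  by apply: submx_trans (HU a); apply: submxMr; apply: capmxSl.
by apply: submx_trans (HV a); apply: submxMr; apply: capmxSr.
Qed.

Lemma strict_trans Y r (U : 'M[K]_(r, rdim Y)) s (Wm : 'M[K]_(s, \rank U)) :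
  is_rep Y -> strict_sub G U -> @strict_sub K A G (subrep U) s Wm ->
  strict_sub G (Wm *m row_base U).
Proof.
move=> HY [[stU GU] strU] [[stW GW] strW].
have repU := is_rep_sub HY stU.
have repW := is_rep_sub repU stW.
have stV := stable_nest stU stW.
have repV := is_rep_sub HY stV.
split.
  split => //; apply: (G_iso repW repV) GW.
  by apply: nest_iso => //; rewrite submx_refl.
move=> r' U' [stU' GU'].
set C := (U :&: U')%MS.
have GC : G (subrep C) by apply: strU.
have stC : stable C by apply: stable_cap.
have CsU : (C <= row_base U)%MS by rewrite (eq_row_base U) capmxSl.
set pU := pinvmx (row_base U).
have E1 : C *m pU *m row_base U = C by apply: mulmxKpV.
set X' := C *m pU.
have stX : @stable K A (subrep U) _ X'.
  by move=> a /=; rewrite /X' (mul_aux (ract Y a) E1) submxMr // stC.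
have GX : G (sub2 U X').
  apply: (G_iso (is_rep_sub HY stC) (is_rep_sub repU stX)) GC.
  apply: iso_sym; apply: nest_iso => //; by rewrite /X' E1 submx_refl.
have GWX : G (sub2 U (Wm :&: X')%MS) by apply: strW.
have stWX := stable_cap stW stX.
have stVU' := stable_cap stV stU'.
apply: (G_iso (is_rep_sub repU stWX) (is_rep_sub HY stVU')) GWX.
apply: nest_iso => //.
have Kp : Wm *m row_base U *m pU = Wm by apply: (mulmxKp (row_base_free U)).
apply/andP; split.
- set v := (Wm *m row_base U :&: U')%MS.
  have vW : (v <= Wm *m row_base U)%MS by apply: capmxSl.
  have vU : (v <= U)%MS.
    by apply: submx_trans vW _; rewrite -(eq_row_base U) submxMl.
  have vrb : (v <= row_base U)%MS by rewrite (eq_row_base U).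
  rewrite -(mulmxKpV vrb) submxMr // sub_capmx; apply/andP; split.
    by rewrite -Kp submxMr.
  by rewrite /X' submxMr // sub_capmx vU capmxSr.
- rewrite sub_capmx; apply/andP; split.
    by rewrite submxMr // capmxSl.
  apply: submx_trans (submxMr _ (capmxSr _ _)) _.
  by rewrite /X' E1 capmxSr.
Qed.

Lemma theta_trans (R : realType) (th : rep A -> R) Y r (U : 'M[K]_(r, rdim Y))
   s (Wm : 'M[K]_(s, \rank U)) :
  additive_fun th -> is_rep Y -> stable U -> @stable K A (subrep U) s Wm ->
  th (sub2 U Wm) = th (subrep (Wm *m row_base U)).
Proof.
move=> Hth HY stU stW.
have repU := is_rep_sub HY stU.
apply: iso_theta => //; first exact: is_rep_sub repU stW.
  exact: is_rep_sub HY (stable_nest stU stW).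
by apply: nest_iso => //; [exact: stable_nest | by rewrite submx_refl].
Qed.

End Strict.

End Alg.

End AlgM.

Module MainM.
Import AnaM AlgM.
Set Implicit Arguments. Unset Strict Implicit. Unset Printing Implicit Defensive.
Import Order.TTheory GRing.Theory Num.Theory.
Local Open Scope ring_scope.

Notation sub2 U V := (@subrep _ _ (subrep U) _ V).

Section Main.
Variables (K : fieldType) (A : falgType K) (G : rep A -> Prop)
  (R : realType) (theta : R -> rep A -> R).
Hypotheses (tcG : torsion_class G) (gp : green_path G theta).

Lemma add_th t : additive_fun (theta t).
Proof. by case: gp. Qed.

Lemma sub_nonpos t Y r (U : 'M[K]_(r, rdim Y)) :
  is_rep Y ->
  (forall r' (V : 'M[K]_(r', rdim Y)), strict_sub G V -> theta t (subrep V) <= 0) ->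
  strict_sub G U ->
  forall s (Wm : 'M[K]_(s, \rank U)), @strict_sub K A G (subrep U) s Wm ->
    theta t (sub2 U Wm) <= 0.
Proof.
move=> HY HS HU s Wm HW.
rewrite (theta_trans (add_th t) HY HU.1.1 HW.1.1).
exact: HS (strict_trans tcG HY HU HW).
Qed.

Lemma W_sub t Y r (U : 'M[K]_(r, rdim Y)) :
  is_rep Y ->
  (forall r' (V : 'M[K]_(r', rdim Y)), strict_sub G V -> theta t (subrep V) <= 0) ->
  strict_sub G U -> theta t (subrep U) = 0 -> W G (theta t) (subrep U).
Proof.
move=> HY HS HU h0; split.
- exact: is_rep_sub HY HU.1.1.
- exact: HU.1.2.
- by split => // s Wm HW; apply: sub_nonpos HW.
Qed.

Lemma main_ind Y (b : R) :
  is_rep Y ->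
  (forall r' (V : 'M[K]_(r', rdim Y)), strict_sub G V -> theta b (subrep V) <= 0) ->
  forall n r (U : 'M[K]_(r, rdim Y)) a, (\rank U <= n)%N -> strict_sub G U ->
    (0 < \rank U)%N -> a < b -> 0 <= theta a (subrep U) -> False.
Proof.
move=> HY HS; elim=> [|n IH] r U a hn HU hr ab ha.
  by move: hn; rewrite leqn0 => /eqP E; move: hr; rewrite E.
have stU := HU.1.1.
have repU := is_rep_sub HY stU.
set h := fun t => theta t (subrep U).
have hd : forall x, derivable h x 1.
  by move=> x; case: gp => _ Hs _ _ _; exact: (Hs _ repU 0%N x).
have Dpos : forall t, D_G G (theta t) (subrep U) -> 0 < derive1 h t.
  by move=> t Dt; case: gp => _ _ Hd _ _; apply: Hd => //; exact: HU.1.2.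
have [t [ta tb ht nd]] : exists t, [/\ a <= t, t < b, h t = 0 & ~ (0 < derive1 h t)].
  apply: RA => //; first exact: HS.
  by move=> hb0; apply: Dpos; split => // s Wm HW; apply: sub_nonpos HW.
have [s [Wm [HW Wp]]] : exists s (Wm : 'M[K]_(s, \rank U)),
    @strict_sub K A G (subrep U) s Wm /\ 0 < theta t (sub2 U Wm).
  apply: contrapT => Hn; apply: nd; apply: Dpos; split => // s Wm HW.
  rewrite leNgt; apply/negP => hp; apply: Hn; by exists s, Wm.
have stW := HW.1.1.
have repW := is_rep_sub repU stW.
have rW : (\rank Wm < \rank U)%N.
  rewrite ltn_neqAle rank_leq_col andbT; apply/negP => /eqP E.
  have := iso_theta (add_th t) repU repW (full_iso stW E).
  rewrite -/(h t) ht; lra.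
have rW0 : (0 < \rank Wm)%N.
  rewrite lt0n; apply/negP => /eqP E.
  by move: Wp; rewrite (theta0 (add_th t) repW E) ltxx.
apply: (IH _ (Wm *m row_base U) t).
- by rewrite mxrankMfree ?row_base_free // -ltnS (leq_trans rW).
- by have := strict_trans tcG HY HU; apply.
- by rewrite mxrankMfree ?row_base_free.
- exact: tb.
- by rewrite -(theta_trans (add_th t) HY stU stW) ltW.
Qed.


Lemma inv_hom (X Y : rep A) (f : 'M[K]_(rdim X, rdim Y)) (g : 'M[K]_(rdim Y, rdim X)) :
  is_hom f -> f *m g = 1%:M -> g *m f = 1%:M -> is_hom g.
Proof.
move=> Hf fg gf a.
by rewrite -[LHS]mul1mx -gf -mulmxA (mulmxA f) -Hf -mulmxA fg mulmx1.
Qed.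

Lemma part1 (t0 t1 : R) (X0 X1 : rep A) (f : 'M[K]_(rdim X0, rdim X1)) :
  t0 < t1 -> W G (theta t0) X0 -> W G (theta t1) X1 -> strict_mor G f -> f = 0.
Proof.
move=> t01 [HX0 GX0 [th0 D0]] [HX1 GX1 [th1 D1]] [Hf _ _ Hk Hi].
apply: contrapT => fn0.
apply: (main_ind HX1 D1 (leqnn _) Hi _ t01).
  by rewrite lt0n mxrank_eq0; apply/eqP.
have := kerim_theta HX0 HX1 Hf (add_th t0); rewrite th0.
have := D0 _ _ Hk; lra.
Qed.

Lemma part2 (t : R) (X Y : rep A) (f : 'M[K]_(rdim X, rdim Y)) :
  W0 G (theta t) X -> W0 G (theta t) Y -> ~ rep_iso X Y ->
  strict_mor G f -> f = 0.
Proof.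
move=> [WX X0 HX0] [WY Y0 HY0] niso [Hf _ _ Hk Hi].
case: (WX) => HX GX [thX DX]; case: (WY) => HY GY [thY DY].
apply: contrapT => fn0.
have E := kerim_theta HX HY Hf (add_th t).
have k1 := DX _ _ Hk; have i1 := DY _ _ Hi.
have k0 : theta t (subrep (kermx f)) = 0 by lra.
have i0 : theta t (subrep f) = 0 by lra.
have rf0 : (0 < \rank f)%N by rewrite lt0n mxrank_eq0; apply/eqP.
have rk := mxrank_ker f.
have rfX : \rank f = rdim X.
  case: (ltnP 0 (\rank (kermx f))) => hk.
    case: (ltnP (\rank (kermx f)) (rdim X)) => hk2.
      by exfalso; apply: (HX0 _ _ Hk); [rewrite hk hk2 | apply: W_sub].
    by move: hk2; rewrite rk => hk2; exfalso; move: (rank_leq_row f) rf0 hk2 => ? ?; lia.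
  move: hk; rewrite leqn0 rk subn_eq0 => hk.
  by apply/eqP; rewrite eqn_leq rank_leq_row hk.
have rfY : \rank f = rdim Y.
  case: (ltnP (\rank f) (rdim Y)) => hk2.
    by exfalso; apply: (HY0 _ _ Hi); [rewrite rf0 hk2 | apply: W_sub].
  by apply/eqP; rewrite eqn_leq rank_leq_col hk2.
have ffree : row_free f by rewrite /row_free rfX.
have ffull : row_full f by rewrite /row_full rfY.
apply: niso; exists f, (pinvmx f); split => //.
- exact: inv_hom Hf (mulmxVp ffree) (mulVpmx ffull).
- exact: mulmxVp.
- exact: mulVpmx.
Qed.

End Main.

End MainM.
Import MainM.

Unset Implicit Arguments.
Local Open Scope ring_scope.

Theorem mainTheorem17 (K : fieldType) (A : falgType K) (G : rep A -> Prop)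
  (R : realType) (theta : R -> rep A -> R) :
  torsion_class G -> green_path G theta ->
  (forall (t0 t1 : R) (X0 X1 : rep A) (f : 'M[K]_(rdim X0, rdim X1)),
      t0 < t1 -> W G (theta t0) X0 -> W G (theta t1) X1 ->
      strict_mor G f -> f = 0) /\
  (forall (t : R) (X Y : rep A) (f : 'M[K]_(rdim X, rdim Y)),
      W0 G (theta t) X -> W0 G (theta t) Y -> ~ rep_iso X Y ->
      strict_mor G f -> f = 0).
Proof.
move=> tcG gp; split.
- by move=> t0 t1 X0 X1 f; apply: part1.
- by move=> t X Y f; apply: part2.
Qed.
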